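(* Suppose Assumptions 1–4 hold and $p$ is convex. Let $$s=\inf\{q\ge0 : p(q)=\min_n C_n'(0)\},\qquad t=\inf\{q\ge0:\ \min_n C_n'(q)\ge p(q)+q\,\partial_+p(q)\}.$$ If $\partial_-p(s)<0$, then every monopoly output $\mathbf{x}^P$ satisfies $$\gamma(\mathbf{x}^P)\ge\frac{\partial_-p(s)}{3\,\partial_-p(s)+\partial_+p(t)}.$$
   Context: Cournot model: $N$ suppliers, inverse demand $p:[0,\infty)\to[0,\infty)$, supplier $n$ has cost $C_n:[0,\infty)\to[0,\infty)$ and chooses $x_n\ge0$; $X=\sum_n x_n$. $\partial_\pm$ denote right/left derivatives; $C_n'(0)$ is the right derivative at $0$. Assumption 1: each $C_n$ is convex, continuous, nondecreasing on $[0,\infty)$, continuously differentiable on $(0,\infty)$, with $C_n(0)=0$. Assumption 2: $p$ is continuous, nonnegative, nonincreasing, $p(0)>0$; its right derivative at $0$ exists and at every $q>0$ its left and right derivatives exist. Assumption 3: there exists $R>0$ such that $p(R)\le\min_n C_n'(0)$. Assumption 4: $p(0)>\min_n C_n'(0)$. A monopoly output is an optimal solution $\mathbf{x}^P$ of $\max_{\mathbf{x}\ge0}\ p\!\left(\sum_n x_n\right)\sum_n x_n-\sum_n C_n(x_n)$. Social welfare of $\mathbf{x}\ge0$: $W(\mathbf{x})=\int_0^X p(q)\,dq-\sum_{n=1}^N C_n(x_n)$; a social optimum $\mathbf{x}^S$ maximizes $W$. Efficiency: $\gamma(\mathbf{x})=W(\mathbf{x})/W(\mathbf{x}^S)$.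 *)

(* Defs.v *)
From Stdlib Require Import Reals Lra ClassicalEpsilon.
Open Scope R_scope.

Fixpoint sumN (N : nat) (f : nat -> R) : R :=
  match N with O => 0 | S k => sumN k f + f k end.

(* min_{n <= k} f n ; for N suppliers use minN (N-1) f *)
Fixpoint minN (k : nat) (f : nat -> R) : R :=
  match k with O => f O | S j => Rmin (minN j f) (f (S j)) end.

Definition min_over (N : nat) (f : nat -> R) : R := minN (N - 1) f.

Definition right_deriv (f : R -> R) (x l : R) : Prop :=
  forall eps, 0 < eps -> exists delta, 0 < delta /\
    forall h, 0 < h < delta -> Rabs ((f (x + h) - f x) / h - l) < eps.
Definition left_deriv (f : R -> R) (x l : R) : Prop :=
  forall eps, 0 < eps -> exists delta, 0 < delta /\
    forall h, - delta < h < 0 -> Rabs ((f (x + h) - f x) / h - l) < eps.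

Definition cont_nonneg (f : R -> R) : Prop :=
  forall q, 0 <= q -> forall eps, 0 < eps -> exists delta, 0 < delta /\
    forall y, 0 <= y -> Rabs (y - q) < delta -> Rabs (f y - f q) < eps.

Definition convex_nonneg (f : R -> R) : Prop :=
  forall x y l, 0 <= x -> 0 <= y -> 0 <= l <= 1 ->
    f (l * x + (1 - l) * y) <= l * f x + (1 - l) * f y.

Definition nondecr_nonneg (f : R -> R) : Prop :=
  forall x y, 0 <= x <= y -> f x <= f y.
Definition nonincr_nonneg (f : R -> R) : Prop :=
  forall x y, 0 <= x <= y -> f y <= f x.

Definition is_inf (S : R -> Prop) (s : R) : Prop :=
  (forall q, S q -> s <= q) /\ (forall b, (forall q, S q -> b <= q) -> b <= s).

(* Riemann integral int_a^b f (value of RiemannInt when f is integrable) *)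
Definition RInt (f : R -> R) (a b : R) : R :=
  epsilon (inhabits 0)
    (fun v => exists pr : Riemann_integrable f a b, RiemannInt pr = v).

Definition nonneg_vec (N : nat) (x : nat -> R) : Prop :=
  forall n, (n < N)%nat -> 0 <= x n.

Definition total (N : nat) (x : nat -> R) : R := sumN N x.

Definition profit (N : nat) (p : R -> R) (C : nat -> R -> R) (x : nat -> R) : R :=
  p (total N x) * total N x - sumN N (fun n => C n (x n)).

Definition welfare (N : nat) (p : R -> R) (C : nat -> R -> R) (x : nat -> R) : R :=
  RInt p 0 (total N x) - sumN N (fun n => C n (x n)).

Definition monopoly_output N p C (x : nat -> R) : Prop :=
  nonneg_vec N x /\ forall y, nonneg_vec N y -> profit N p C y <= profit N p C x.

Definition social_optimum N p C (x : nat -> R) : Prop :=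
  nonneg_vec N x /\ forall y, nonneg_vec N y -> welfare N p C y <= welfare N p C x.

Definition efficiency N p C (xS x : nat -> R) : R :=
  welfare N p C x / welfare N p C xS.

(* Main.v *)
Require Import Defs.
From Stdlib Require Import Reals Lra Lia ClassicalEpsilon Classical.
Open Scope R_scope.
From Coquelicot Require Import Coquelicot.

Lemma div_le P Q u v : 0 < u -> 0 < v -> P * v <= Q * u -> P / u <= Q / v.
Proof.
intros Hu Hv H.
replace (P/u) with ((P*v) * / (u*v)) by (field; lra).
replace (Q/v) with ((Q*u) * / (u*v)) by (field; lra).
apply Rmult_le_compat_r; [|exact H].
left; apply Rinv_0_lt_compat; nra.
Qed.

Lemma le_div P Q u v : 0 < u -> 0 < v -> P / u <= Q / v -> P * v <= Q * u.
Proof.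
intros Hu Hv H.
replace (P*v) with ((P/u) * (u*v)) by (field; lra).
replace (Q*u) with ((Q/v) * (u*v)) by (field; lra).
apply Rmult_le_compat_r; [nra|exact H].
Qed.

Lemma le_div1 P Q u : 0 < u -> P / u <= Q -> P <= Q * u.
Proof. intros Hu H. apply Rmult_le_compat_r with (r := u) in H; [|lra].
  replace (P / u * u) with P in H by (field; lra). exact H. Qed.
Lemma ge_div1 P Q u : 0 < u -> Q <= P / u -> Q * u <= P.
Proof. intros Hu H. apply Rmult_le_compat_r with (r := u) in H; [|lra].
  replace (P / u * u) with P in H by (field; lra). exact H. Qed.

Lemma three f : convex_nonneg f -> forall x y z, 0 <= x -> x < y -> y < z ->
  f y * (z - x) <= f x * (z - y) + f z * (y - x).
Proof.
intros Hf x y z Hx Hxy Hyz.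
set (l := (z - y) / (z - x)).
assert (Hl : 0 <= l <= 1).
{ unfold l; split. apply Rmult_le_pos; [lra|left; apply Rinv_0_lt_compat; lra].
  apply Rmult_le_reg_r with (z - x); [lra|]. unfold Rdiv; rewrite Rmult_assoc, Rinv_l; lra. }
pose proof (Hf x z l Hx ltac:(lra) Hl) as H.
replace (l * x + (1 - l) * z) with y in H by (unfold l; field; lra).
apply Rmult_le_compat_r with (r := z - x) in H; [|lra].
replace ((l * f x + (1 - l) * f z) * (z - x)) with (f x * (z - y) + f z * (y - x)) in H
  by (unfold l; field; lra).
exact H.
Qed.

Lemma slope_mono f : convex_nonneg f -> forall a b c d, 0 <= a -> a < b -> 0 <= c -> c < d ->
  a <= c -> b <= d -> (f b - f a) / (b - a) <= (f d - f c) / (d - c).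
Proof.
intros Hf a b c d Ha Hab Hc Hcd Hac Hbd.
apply Rle_trans with ((f d - f a) / (d - a)).
- destruct (Req_dec b d) as [E|E]. subst; lra.
  apply div_le; try lra.
  pose proof (three f Hf a b d Ha Hab ltac:(lra)). nra.
- destruct (Req_dec a c) as [E|E]. subst; lra.
  apply div_le; try lra.
  pose proof (three f Hf a c d Ha ltac:(lra) Hcd). nra.
Qed.

Lemma LIM2 f x l k M : right_deriv f x l -> 0 < k ->
  (forall h, 0 < h -> h <= k -> (f (x+h) - f x) / h <= M) -> l <= M.
Proof.
intros Hd Hk H. destruct (Rle_or_lt l M) as [|Hlt]; [assumption|exfalso].
destruct (Hd (l - M) ltac:(lra)) as [de [Hde Hh]].
set (h := Rmin de k / 2).
assert (0 < h < de /\ h <= k) as [Hh1 Hh2].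
{ unfold h, Rmin; destruct Rle_dec; lra. }
specialize (Hh h Hh1). specialize (H h ltac:(lra) Hh2).
unfold Rabs in Hh; destruct Rcase_abs in Hh; lra.
Qed.

Lemma LIM3 f x l M : right_deriv f x l ->
  (forall h, 0 < h -> M <= (f (x+h) - f x) / h) -> M <= l.
Proof.
intros Hd H. destruct (Rle_or_lt M l) as [|Hlt]; [assumption|exfalso].
destruct (Hd (M - l) ltac:(lra)) as [de [Hde Hh]].
specialize (Hh (de/2) ltac:(lra)). specialize (H (de/2) ltac:(lra)).
unfold Rabs in Hh; destruct Rcase_abs in Hh; lra.
Qed.

Lemma LIM4 f x l k M : left_deriv f x l -> 0 < k ->
  (forall h, - k <= h -> h < 0 -> M <= (f (x+h) - f x) / h) -> M <= l.
Proof.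
intros Hd Hk H. destruct (Rle_or_lt M l) as [|Hlt]; [assumption|exfalso].
destruct (Hd (M - l) ltac:(lra)) as [de [Hde Hh]].
set (h := - (Rmin de k / 2)).
assert (- de < h < 0 /\ - k <= h) as [Hh1 Hh2].
{ unfold h, Rmin; destruct Rle_dec; lra. }
specialize (Hh h Hh1). specialize (H h Hh2 ltac:(lra)).
unfold Rabs in Hh; destruct Rcase_abs in Hh; lra.
Qed.

Lemma LIMR f1 f2 x1 x2 l1 l2 : right_deriv f1 x1 l1 -> right_deriv f2 x2 l2 ->
  (forall h, 0 < h -> (f1 (x1+h) - f1 x1) / h <= (f2 (x2+h) - f2 x2) / h) -> l1 <= l2.
Proof.
intros H1 H2 H. destruct (Rle_or_lt l1 l2) as [|Hlt]; [assumption|exfalso].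
destruct (H1 ((l1 - l2)/2) ltac:(lra)) as [d1 [Hd1 G1]].
destruct (H2 ((l1 - l2)/2) ltac:(lra)) as [d2 [Hd2 G2]].
set (h := Rmin d1 d2 / 2).
assert (0 < h < d1 /\ 0 < h < d2) as [Hh1 Hh2].
{ unfold h, Rmin; destruct Rle_dec; lra. }
specialize (G1 h Hh1). specialize (G2 h Hh2). specialize (H h ltac:(lra)).
unfold Rabs in G1, G2; destruct Rcase_abs in G1; destruct Rcase_abs in G2; lra.
Qed.

Lemma sumN_ext N f g : (forall k, (k < N)%nat -> f k = g k) -> sumN N f = sumN N g.
Proof. induction N; simpl; intros H; auto. rewrite IHN, H; auto. Qed.
Lemma sumN_plus N f g : sumN N (fun k => f k + g k) = sumN N f + sumN N g.
Proof. induction N; simpl; [ring|rewrite IHN; ring]. Qed.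
Lemma sumN_minus N f g : sumN N (fun k => f k - g k) = sumN N f - sumN N g.
Proof. induction N; simpl; [ring|rewrite IHN; ring]. Qed.
Lemma sumN_scal N a f : sumN N (fun k => a * f k) = a * sumN N f.
Proof. induction N; simpl; [ring|rewrite IHN; ring]. Qed.
Lemma sumN_le N f g : (forall k, (k < N)%nat -> f k <= g k) -> sumN N f <= sumN N g.
Proof. induction N; simpl; intros H; [lra|]. pose proof (H N ltac:(lia)). pose proof (IHN ltac:(intros; apply H; lia)). lra. Qed.
Lemma sumN_zero N : sumN N (fun _ => 0) = 0.
Proof. induction N; simpl; [ring|rewrite IHN; ring]. Qed.
Lemma sumN_nonneg N f : (forall k, (k < N)%nat -> 0 <= f k) -> 0 <= sumN N f.
Proof. intros H. rewrite <- (sumN_zero N). apply sumN_le. auto. Qed.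
Lemma sumN_comp N f n : (forall k, (k < N)%nat -> 0 <= f k) -> (n < N)%nat -> f n <= sumN N f.
Proof.
induction N; intros H Hn; [lia|]. simpl.
destruct (Nat.eq_dec n N) as [->|E].
- pose proof (sumN_nonneg N f ltac:(intros; apply H; lia)). lra.
- pose proof (IHN ltac:(intros; apply H; lia) ltac:(lia)). pose proof (H N ltac:(lia)). lra.
Qed.
Lemma sumN_if N n a b : (n < N)%nat ->
  sumN N (fun k => if Nat.eqb k n then a k else b k) = sumN N b + (a n - b n).
Proof.
induction N; intros Hn; [lia|]. simpl.
destruct (Nat.eq_dec n N) as [->|E].
- rewrite Nat.eqb_refl.
  rewrite (sumN_ext N _ b). ring. intros k Hk. destruct (Nat.eqb_spec k N); [lia|auto].
- rewrite IHN by lia. destruct (Nat.eqb_spec N n); [lia|]. ring.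
Qed.

Lemma minN_le k f j : (j <= k)%nat -> minN k f <= f j.
Proof.
induction k; intros Hj; simpl.
- replace j with 0%nat by lia. lra.
- destruct (Nat.eq_dec j (S k)) as [->|E]. apply Rmin_r.
  eapply Rle_trans; [apply Rmin_l| apply IHk; lia].
Qed.
Lemma minN_att k f : exists j, (j <= k)%nat /\ minN k f = f j.
Proof.
induction k; simpl. exists 0%nat; auto.
destruct IHk as [j [Hj E]]. unfold Rmin; destruct Rle_dec.
exists j; split; [lia|auto]. exists (S k); auto.
Qed.

Lemma mul_lt_of_div m Q h : 0 < h -> m < Q / h -> m * h < Q.
Proof. intros Hh H. apply Rmult_lt_compat_r with (r := h) in H; auto.
  replace (Q / h * h) with Q in H by (field; lra). exact H. Qed.
Lemma mul_gt_of_div m Q h : 0 < h -> Q / h < m -> Q < m * h.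
Proof. intros Hh H. apply Rmult_lt_compat_r with (r := h) in H; auto.
  replace (Q / h * h) with Q in H by (field; lra). exact H. Qed.

Lemma costlim (f : R -> R) D0 (D : R -> R) X eps : 0 <= X -> 0 < eps ->
  right_deriv f 0 D0 -> D 0 = D0 -> (forall q, 0 < q -> derivable_pt_lim f q (D q)) ->
  exists de, 0 < de /\ forall h, 0 < h < de -> (f (X + h) - f X) / h < D X + eps.
Proof.
intros HX He H0 ED Hd.
destruct (Req_dec X 0) as [->|NX].
- destruct (H0 eps He) as [de [Hde G]]. exists de; split; auto.
  intros h Hh. specialize (G h Hh). rewrite ED. unfold Rabs in G; destruct Rcase_abs in G; lra.
- destruct (Hd X ltac:(lra) eps He) as [de G]. exists de; split. apply cond_pos.
  intros h Hh. assert (h <> 0) by lra. specialize (G h H).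
  assert (Rabs h < de) by (rewrite Rabs_right; lra). specialize (G H1).
  unfold Rabs in G; destruct Rcase_abs in G; lra.
Qed.

Lemma mono_t (N : nat) (p : R -> R) (C : nat -> R -> R) (dC : nat -> R -> R) (dpR : R -> R) (t : R) xP :
  (1 <= N)%nat ->
  (forall n, (n < N)%nat -> convex_nonneg (C n)) ->
  (forall n, (n < N)%nat -> forall q, 0 < q -> derivable_pt_lim (C n) q (dC n q)) ->
  (forall n, (n < N)%nat -> right_deriv (C n) 0 (dC n 0)) ->
  cont_nonneg p ->
  (forall q, 0 <= q -> right_deriv p q (dpR q)) ->
  (forall q, (0 <= q /\ p q + q * dpR q <= min_over N (fun n => dC n q)) -> t <= q) ->
  monopoly_output N p C xP -> t <= total N xP.
Proof.
intros HN Hconv Hder Hder0 Hpc HpR Ht [Hnn Hopt].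
set (X := total N xP).
assert (HX : 0 <= X) by (apply sumN_nonneg; auto).
destruct (Rle_or_lt t X) as [|HtX]; [assumption|exfalso].
assert (Hnot : min_over N (fun n => dC n X) < p X + X * dpR X).
{ destruct (Rle_or_lt (p X + X * dpR X) (min_over N (fun n => dC n X))) as [H|H]; auto.
  specialize (Ht X (conj HX H)). lra. }
unfold min_over in Hnot. destruct (minN_att (N - 1) (fun n => dC n X)) as [n [Hn E]].
rewrite E in Hnot. assert (HnN : (n < N)%nat) by lia.
set (g := p X + X * dpR X - dC n X).
set (eps := g / (2 * (2 + X))).
assert (Heps : 0 < eps). { unfold eps, g. apply Rdiv_lt_0_compat; lra. }
destruct (Hpc X HX eps Heps) as [d1 [Hd1 G1]].
destruct (HpR X HX eps Heps) as [d2 [Hd2 G2]].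
destruct (costlim (C n) (dC n 0) (dC n) X eps HX Heps (Hder0 n HnN) eq_refl (Hder n HnN)) as [d3 [Hd3 G3]].
set (h := Rmin d1 (Rmin d2 d3) / 2).
assert (Hh : 0 < h /\ h < d1 /\ h < d2 /\ h < d3).
{ unfold h, Rmin; repeat destruct Rle_dec; lra. }
destruct Hh as [Hh0 [Hh1 [Hh2 Hh3]]].
set (y := fun k => if Nat.eqb k n then xP k + h else xP k).
assert (Hy : nonneg_vec N y).
{ intros k Hk. unfold y. destruct (Nat.eqb k n); specialize (Hnn k Hk); lra. }
specialize (Hopt y Hy). unfold profit, total in Hopt.
unfold y in Hopt. rewrite sumN_if in Hopt by exact HnN.
rewrite (sumN_ext N (fun n0 => C n0 (if Nat.eqb n0 n then xP n0 + h else xP n0))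
   (fun k => if Nat.eqb k n then C k (xP k + h) else C k (xP k))) in Hopt.
2:{ intros k _. destruct (Nat.eqb k n); auto. }
rewrite sumN_if in Hopt by exact HnN.
fold (total N xP) in Hopt. fold X in Hopt.
replace (X + (xP n + h - xP n)) with (X + h) in Hopt by ring.
assert (B1 : p X - eps < p (X + h)).
{ assert (Rabs (X + h - X) < d1) by (rewrite Rabs_right; lra).
  specialize (G1 (X + h) ltac:(lra) H). unfold Rabs in G1; destruct Rcase_abs in G1; lra. }
assert (B2 : (dpR X - eps) * h < p (X + h) - p X).
{ apply mul_lt_of_div; auto. specialize (G2 h ltac:(lra)).
  unfold Rabs in G2; destruct Rcase_abs in G2; lra. }
assert (B3 : C n (xP n + h) - C n (xP n) < (dC n X + eps) * h).
{ apply mul_gt_of_div; auto.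
  assert (xn : xP n <= X) by (apply sumN_comp; auto).
  pose proof (slope_mono (C n) (Hconv n HnN) (xP n) (xP n + h) X (X + h)
     (Hnn n HnN) ltac:(lra) HX ltac:(lra) xn ltac:(lra)) as SM.
  replace (xP n + h - xP n) with h in SM by ring.
  replace (X + h - X) with h in SM by ring.
  specialize (G3 h ltac:(lra)). lra. }
assert (B4 : X * ((dpR X - eps) * h) <= X * (p (X + h) - p X)).
{ apply Rmult_le_compat_l; lra. }
assert (B5 : h * (p X - eps) <= h * p (X + h)) by (apply Rmult_le_compat_l; lra).
assert (Hg : eps * (2 * (2 + X)) = g) by (unfold eps; field; lra).
assert (h * g > 0) by (apply Rmult_lt_0_compat; unfold g; lra).
assert (E1 : p (X + h) * (X + h) = h * p (X + h) + X * (p (X + h) - p X) + X * p X) by ring.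
assert (E2 : h * (p X - eps) + X * ((dpR X - eps) * h) - (dC n X + eps) * h = h * g - h * (eps * (2 * (2 + X))) / 2) by (unfold g; field).
rewrite Hg in E2.
lra.
Qed.
Lemma cont_ext p : cont_nonneg p -> forall z, continuous (fun q => p (Rmax 0 q)) z.
Proof.
intros Hc z. apply continuity_pt_filterlim.
intros eps Heps.
destruct (Hc (Rmax 0 z) (Rmax_l _ _) eps Heps) as [d [Hd H]].
exists d; split; [exact Hd|].
intros y [_ Hy]. simpl in Hy. unfold R_dist in *. simpl. unfold R_dist.
apply H. apply Rmax_l.
unfold Rmax; destruct (Rle_dec 0 y); destruct (Rle_dec 0 z);
  unfold Rabs in *; repeat destruct Rcase_abs; lra.
Qed.

Lemma pint_ex p : cont_nonneg p -> forall a b, 0 <= a -> 0 <= b -> ex_RInt p a b.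
Proof.
intros Hc a b Ha Hb.
apply ex_RInt_ext with (fun q => p (Rmax 0 q)).
intros x [H1 H2]. f_equal. apply Rmax_right.
unfold Rmin in H1; destruct Rle_dec; lra.
apply (ex_RInt_continuous (V:=R_CompleteNormedModule)). intros; apply cont_ext; auto.
Qed.

Lemma RInt_eq p : cont_nonneg p -> forall a b, 0 <= a -> 0 <= b ->
  Defs.RInt p a b = RInt p a b.
Proof.
intros Hc a b Ha Hb. unfold Defs.RInt.
pose proof (ex_RInt_Reals_0 _ _ _ (pint_ex p Hc a b Ha Hb)) as pr.
destruct (epsilon_spec (inhabits 0) (fun v => exists pr : Riemann_integrable p a b, RiemannInt pr = v))
  as [pr' E].
exists (RiemannInt pr); exists pr; reflexivity.
rewrite <- E. symmetry. apply RInt_Reals.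
Qed.

Lemma RInt_lin al be a b : RInt (fun q => al + be * q) a b = al * (b - a) + be * (b*b - a*a) / 2.
Proof.
apply is_RInt_unique.
replace (al * (b - a) + be * (b*b - a*a) / 2) with
  (minus ((fun q => al * q + be * (q*q) / 2) b) ((fun q => al * q + be * (q*q) / 2) a)).
apply (is_RInt_derive (V:=R_CompleteNormedModule) (fun q => al * q + be * (q*q) / 2)).
intros x _. auto_derive; auto. simpl. field.
intros x _. apply continuity_pt_filterlim. apply derivable_continuous_pt. apply derivable_pt_plus. apply derivable_pt_const. apply derivable_pt_mult. apply derivable_pt_const. apply derivable_pt_id.
unfold minus, plus, opp; simpl. field.
Qed.

Lemma ex_lin al be a b : ex_RInt (fun q => al + be * q) a b.
Proof.
apply (ex_RInt_continuous (V:=R_CompleteNormedModule)). intros; apply continuity_pt_filterlim. apply derivable_continuous_pt. apply derivable_pt_plus. apply derivable_pt_const. apply derivable_pt_mult. apply derivable_pt_const. apply derivable_pt_id.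
Qed.

Lemma chasles p : cont_nonneg p -> forall a b, 0 <= a -> 0 <= b ->
  RInt p 0 b - RInt p 0 a = RInt p a b.
Proof.
intros Hc a b Ha Hb.
rewrite <- (RInt_Chasles p 0 a b). unfold plus; simpl. set (u := RInt p 0 a). set (v := RInt p a b). change (u + v - u = v). ring.
apply pint_ex; auto; lra. apply pint_ex; auto; lra.
Qed.

Lemma int_le_aff p : cont_nonneg p -> forall a b al be, 0 <= a -> a <= b ->
  (forall q, a < q < b -> p q <= al + be * q) -> RInt p a b <= al * (b - a) + be * (b*b - a*a) / 2.
Proof.
intros Hc a b al be Ha Hab H. rewrite <- RInt_lin.
apply RInt_le; auto. apply pint_ex; auto; lra. apply ex_lin.
Qed.

Lemma int_ge_aff p : cont_nonneg p -> forall a b al be, 0 <= a -> a <= b ->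
  (forall q, a < q < b -> al + be * q <= p q) -> al * (b - a) + be * (b*b - a*a) / 2 <= RInt p a b.
Proof.
intros Hc a b al be Ha Hab H. rewrite <- RInt_lin.
apply RInt_le; auto. apply ex_lin. apply pint_ex; auto; lra.
Qed.

Theorem corollary3
  (N : nat) (p : R -> R) (C : nat -> R -> R)
  (dC : nat -> R -> R)
  (dpR dpL : R -> R)
  (s t : R)
  (HN : (1 <= N)%nat)
  (HC0 : forall n, (n < N)%nat -> C n 0 = 0)
  (HCcont : forall n, (n < N)%nat -> cont_nonneg (C n))
  (HCconv : forall n, (n < N)%nat -> convex_nonneg (C n))
  (HCmono : forall n, (n < N)%nat -> nondecr_nonneg (C n))
  (HCder : forall n, (n < N)%nat -> forall q, 0 < q -> derivable_pt_lim (C n) q (dC n q))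
  (HCder_cont : forall n, (n < N)%nat -> forall q, 0 < q -> continuity_pt (dC n) q)
  (HCder0 : forall n, (n < N)%nat -> right_deriv (C n) 0 (dC n 0))
  (Hpcont : cont_nonneg p)
  (Hpnonneg : forall q, 0 <= q -> 0 <= p q)
  (Hpmono : nonincr_nonneg p)
  (Hp0 : 0 < p 0)
  (HpR : forall q, 0 <= q -> right_deriv p q (dpR q))
  (HpL : forall q, 0 < q -> left_deriv p q (dpL q))
  (HA3 : exists R0, 0 < R0 /\ p R0 <= min_over N (fun n => dC n 0))
  (HA4 : min_over N (fun n => dC n 0) < p 0)
  (Hpconv : convex_nonneg p)
  (Hs : is_inf (fun q => 0 <= q /\ p q = min_over N (fun n => dC n 0)) s)
  (Ht : is_inf (fun q => 0 <= q /\
          p q + q * dpR q <= min_over N (fun n => dC n q)) t)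
  (Hds : dpL s < 0) :
  forall xP xS, monopoly_output N p C xP -> social_optimum N p C xS ->
    dpL s / (3 * dpL s + dpR t) <= efficiency N p C xS xP.
Proof.
intros xP xS HP HS.
pose proof HP as [HPnn HPopt]. pose proof HS as [HSnn HSopt].
set (c := min_over N (fun n => dC n 0)) in *.
assert (Hcn : forall n, (n < N)%nat -> c <= dC n 0).
{ intros n Hn. unfold c, min_over. apply (minN_le (N-1) (fun n => dC n 0)). lia. }
destruct Hs as [Hs1 Hs2].
assert (Hs0 : 0 <= s) by (apply Hs2; intros q [Hq _]; exact Hq).
assert (Hps : p s <= c).
{ destruct (Rle_or_lt (p s) c) as [|H]; auto. exfalso.
  destruct (Hpcont s Hs0 (p s - c) ltac:(lra)) as [de [Hde G]].
  assert (Hex : exists q, (0 <= q /\ p q = c) /\ q < s + de).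
  { apply NNPP. intros Hn. assert (s + de <= s); [|lra].
    apply Hs2. intros q Hq. destruct (Rle_or_lt (s + de) q); auto.
    exfalso; apply Hn; exists q; auto. }
  destruct Hex as [q [[Hq0 Hqc] Hq]]. pose proof (Hs1 q (conj Hq0 Hqc)).
  assert (Rabs (q - s) < de) by (rewrite Rabs_right; lra).
  specialize (G q Hq0 H1). unfold Rabs in G; destruct Rcase_abs in G; lra. }
assert (Hspos : 0 < s).
{ destruct Hs0 as [|E]; auto. subst s. lra. }
destruct Ht as [Ht1 Ht2].
assert (Ht0 : 0 <= t) by (apply Ht2; intros q [Hq _]; exact Hq).
set (X := total N xP).
assert (HX0 : 0 <= X) by (apply sumN_nonneg; auto).
assert (HXt : t <= X).
{ apply (mono_t N p C dC dpR t xP); auto. }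
assert (HdX : dpR X <= 0).
{ apply (LIM2 p X (dpR X) 1 0 (HpR X HX0) ltac:(lra)).
  intros h Hh _. pose proof (Hpmono X (X + h) ltac:(lra)).
  apply Rmult_le_reg_r with h; auto. unfold Rdiv; rewrite Rmult_assoc, Rinv_l; lra. }
assert (Hte : dpR t <= dpR X).
{ apply (LIMR p p t X); auto.
  intros h Hh. pose proof (slope_mono p Hpconv t (t+h) X (X+h) Ht0 ltac:(lra) HX0 ltac:(lra) HXt ltac:(lra)) as SM.
  replace (t + h - t) with h in SM by ring. replace (X + h - X) with h in SM by ring. exact SM. }
set (a := - dpR X).
set (D := - dpL s).
set (E := - dpR t).
assert (Ha0 : 0 <= a) by (unfold a; lra).
assert (HaE : a <= E) by (unfold a, E; lra).
assert (HD : 0 < D) by (unfold D; lra).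
assert (Htan : forall q, 0 <= q < X -> p X + a * (X - q) <= p q).
{ intros q Hq.
  assert (HS' : (p X - p q) / (X - q) <= dpR X).
  { apply (LIM3 p X (dpR X)); auto. intros h Hh.
    pose proof (slope_mono p Hpconv q X X (X+h) ltac:(lra) ltac:(lra) HX0 ltac:(lra) ltac:(lra) ltac:(lra)) as SM.
    replace (X + h - X) with h in SM by ring. exact SM. }
  apply le_div1 in HS'; try lra.
  unfold a. lra. }
assert (Hchord : X < s -> forall q, X <= q <= s -> p q <= p X - D * (q - X)).
{ intros HXs.
  assert (HS' : (p s - p X) / (s - X) <= dpL s).
  { apply (LIM4 p s (dpL s) (s - X)); auto. lra. intros h Hh1 Hh2.
    destruct (Req_dec h (- (s - X))) as [Eh|Eh].
    - subst h. replace (s + - (s - X)) with X by ring.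
      right. field. lra.
    - pose proof (slope_mono p Hpconv X s (s+h) s ltac:(lra) HXs ltac:(lra) ltac:(lra) ltac:(lra) ltac:(lra)) as SM.
      replace ((p (s + h) - p s) / h) with ((p s - p (s + h)) / (s - (s + h))) by (field; lra).
      exact SM. }
  intros q Hq. destruct (Req_dec q X) as [->|Eq]. lra.
  pose proof (slope_mono p Hpconv X q X s HX0 ltac:(lra) HX0 HXs ltac:(lra) ltac:(lra)) as SM.
  assert (Hq' : (p q - p X) / (q - X) <= - D) by (unfold D; lra).
  apply le_div1 in Hq'; try lra. }
assert (HC0sum : sumN N (fun k => C k 0) = 0).
{ rewrite (sumN_ext N _ (fun _ => 0)). apply sumN_zero. intros; auto. }
assert (HPx : sumN N (fun k => C k (xP k)) <= p X * X).
{ assert (Hz : nonneg_vec N (fun _ => 0)) by (intros k _; lra).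
  specialize (HPopt _ Hz). unfold profit in HPopt. cbv beta in HPopt.
  assert (total N (fun _ : nat => 0) = 0) by (unfold total; apply sumN_zero).
  rewrite H, HC0sum in HPopt. fold X in HPopt. lra. }
set (Wx := welfare N p C xP).
assert (HWx : Wx = RInt p 0 X - sumN N (fun k => C k (xP k))).
{ unfold Wx, welfare. rewrite RInt_eq; auto; lra. }
assert (HWxlow : a * (X * X) / 2 <= Wx).
{ rewrite HWx.
  pose proof (int_ge_aff p Hpcont 0 X (p X + a * X) (- a) ltac:(lra) HX0) as I.
  assert (a * (X*X)/2 + p X * X <= RInt p 0 X); [|lra].
  eapply Rle_trans; [|apply I]. right; field.
  intros q Hq. pose proof (Htan q ltac:(lra)). lra. }
assert (Hkey : forall y, nonneg_vec N y -> total N y <= s ->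
          welfare N p C y <= Wx + (a * X) * (a * X) / (2 * D)).
{ intros y Hy HYs. set (Y := total N y) in *.
  assert (HY0 : 0 <= Y) by (apply sumN_nonneg; auto).
  assert (HWy : welfare N p C y = RInt p 0 Y - sumN N (fun k => C k (y k))).
  { unfold welfare. fold Y. rewrite RInt_eq; auto; lra. }
  rewrite HWy, HWx.
  assert (Hext : 0 <= (a * X) * (a * X) / (2 * D)).
  { apply Rmult_le_pos. nra. left; apply Rinv_0_lt_compat; lra. }
  destruct (Rle_or_lt Y X) as [HYX|HXY].
  - pose proof (HPopt y Hy) as Hpr. unfold profit in Hpr. fold Y X in Hpr.
    pose proof (chasles p Hpcont Y X HY0 HX0) as Ch.
    pose proof (int_ge_aff p Hpcont Y X (p X) 0 HY0 HYX) as I.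
    assert (p X * (X - Y) <= RInt p Y X).
    { eapply Rle_trans; [|apply I]. lra.
      intros q Hq. pose proof (Hpmono q X ltac:(lra)). lra. }
    pose proof (Hpmono Y X ltac:(lra)).
    assert (Y * p X <= Y * p Y) by (apply Rmult_le_compat_l; lra).
    lra.
  - set (V := Y - X).
    assert (HV : 0 < V) by (unfold V; lra).
    set (dCs := sumN N (fun k => C k (y k)) - sumN N (fun k => C k (xP k))).
    assert (K : forall h, 0 < h <= 1 -> V * p (X + h * V) - a * X * V <= dCs).
    { intros h Hh.
      set (z := fun k => h * y k + (1 - h) * xP k).
      assert (Hz : nonneg_vec N z).
      { intros k Hk. unfold z. pose proof (Hy k Hk). pose proof (HPnn k Hk). nra. }
      assert (HZ : total N z = X + h * V).
      { unfold total, z. rewrite sumN_plus, !sumN_scal. fold (total N y) (total N xP). fold Y X.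
        unfold V; ring. }
      assert (HCz : sumN N (fun k => C k (z k)) <=
                    h * sumN N (fun k => C k (y k)) + (1 - h) * sumN N (fun k => C k (xP k))).
      { rewrite <- !sumN_scal, <- sumN_plus. apply sumN_le. intros k Hk. unfold z.
        apply HCconv; auto; lra. }
      pose proof (HPopt z Hz) as Hpr. unfold profit in Hpr. rewrite HZ in Hpr. fold X in Hpr.
      assert (Hsl : dpR X <= (p (X + h * V) - p X) / (h * V)).
      { apply (LIM2 p X (dpR X) (h * V)); auto. nra.
        intros h' Hh' Hh'2. destruct (Req_dec h' (h * V)) as [->|Ne]. lra.
        pose proof (slope_mono p Hpconv X (X + h') X (X + h * V) HX0 ltac:(lra) HX0 ltac:(nra) ltac:(lra) ltac:(lra)) as SM.
        replace (X + h' - X) with h' in SM by ring. replace (X + h * V - X) with (h * V) in SM by ring.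
        exact SM. }
      assert (HhV : 0 < h * V) by nra.
      apply ge_div1 in Hsl; try lra.
      assert (E3 : X * (- a * (h * V)) <= X * (p (X + h * V) - p X)).
      { apply Rmult_le_compat_l; auto. unfold a. lra. }
      assert (E4 : p (X + h * V) * (X + h * V) - p X * X = h * (V * p (X + h * V)) + X * (p (X + h * V) - p X)) by ring.
      assert (E5 : h * (V * p (X + h * V) - a * X * V) <= h * dCs).
      { unfold dCs. nra. }
      apply Rmult_le_reg_l with h; lra. }
    assert (K2 : V * p X - a * X * V <= dCs).
    { destruct (Rle_or_lt (V * p X - a * X * V) dCs) as [|Hlt]; auto. exfalso.
      set (ep := (V * p X - a * X * V - dCs) / V).
      assert (Hep : 0 < ep) by (unfold ep; apply Rdiv_lt_0_compat; lra).
      destruct (Hpcont X HX0 ep Hep) as [de [Hde G]].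
      set (h := Rmin 1 (de / (2 * V))).
      assert (Hh : 0 < h <= 1 /\ h * V < de).
      { unfold h, Rmin; destruct Rle_dec.
        - split; [lra|]. apply Rle_lt_trans with (de / 2); [|lra].
          apply Rmult_le_reg_r with (/ V). apply Rinv_0_lt_compat; lra.
          replace (1 * V * / V) with 1 by (field; lra).
          replace (de / 2 * / V) with (de / (2 * V)) by (field; lra). lra.
        - split. split; [apply Rdiv_lt_0_compat; lra| lra].
          replace (de / (2 * V) * V) with (de / 2) by (field; lra). lra. }
      destruct Hh as [Hh1 Hh2].
      specialize (K h Hh1).
      assert (Rabs (X + h * V - X) < de) by (rewrite Rabs_right; nra).
      specialize (G (X + h * V) ltac:(nra) H). unfold Rabs in G; destruct Rcase_abs in G.
      + assert (V * (p X - ep) < V * p (X + h * V)) by (apply Rmult_lt_compat_l; lra).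
        assert (V * ep = V * p X - a * X * V - dCs) by (unfold ep; field; lra). lra.
      + assert (p X <= p (X + h * V)) by lra.
        assert (V * p X <= V * p (X + h * V)) by (apply Rmult_le_compat_l; lra). lra. }
    pose proof (chasles p Hpcont X Y HX0 HY0) as Ch.
    pose proof (int_le_aff p Hpcont X Y (p X + D * X) (- D) HX0 ltac:(lra)) as I.
    assert (I2 : RInt p X Y <= (p X + D * X) * (Y - X) + - D * (Y * Y - X * X) / 2).
    { apply I. intros q Hq. pose proof (Hchord ltac:(lra) q ltac:(lra)). lra. }
    assert (Esq : (a * X) * (a * X) / (2 * D) - (a * X * V - D * V * V / 2) = (a * X - D * V) * (a * X - D * V) / (2 * D))
      by (field; lra).
    assert (0 <= (a * X - D * V) * (a * X - D * V) / (2 * D)).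
    { apply Rmult_le_pos. apply (Rle_0_sqr (a * X - D * V)). left; apply Rinv_0_lt_compat; lra. }
    assert (E6 : (p X + D * X) * (Y - X) + - D * (Y * Y - X * X) / 2 = p X * V - D * V * V / 2)
      by (unfold V; field).
    unfold dCs in K2. lra. }
set (XS := total N xS).
assert (HXS0 : 0 <= XS) by (apply sumN_nonneg; auto).
assert (Hy : exists y, nonneg_vec N y /\ total N y <= s /\ welfare N p C xS <= welfare N p C y).
{ destruct (Rle_or_lt XS s) as [H|H].
  - exists xS. split; [exact HSnn|]. split; [exact H|lra].
  - set (l := s / XS).
    assert (Hl : 0 < l < 1).
    { unfold l; split. apply Rdiv_lt_0_compat; lra.
      apply Rmult_lt_reg_r with XS; [lra|]. unfold Rdiv; rewrite Rmult_assoc, Rinv_l; lra. }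
    exists (fun k => l * xS k). split; [|split].
    + intros k Hk. pose proof (HSnn k Hk). nra.
    + unfold total. rewrite sumN_scal. fold (total N xS) XS. unfold l. right; field; lra.
    + unfold welfare, total. rewrite sumN_scal. fold (total N xS) XS.
      replace (l * XS) with s by (unfold l; field; lra).
      rewrite !RInt_eq; auto; try lra.
      pose proof (chasles p Hpcont s XS Hs0 HXS0) as Ch.
      pose proof (int_le_aff p Hpcont s XS c 0 Hs0 ltac:(lra)) as I.
      assert (I2 : RInt p s XS <= c * (XS - s)).
      { eapply Rle_trans; [apply I|lra]. intros q Hq. pose proof (Hpmono s q ltac:(lra)). lra. }
      assert (Hc : sumN N (fun k => c * ((1 - l) * xS k)) <=
                   sumN N (fun k => C k (xS k)) - sumN N (fun k => C k (l * xS k))).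
      { rewrite <- sumN_minus. apply sumN_le. intros k Hk.
        pose proof (HSnn k Hk) as Hx. pose proof (Hcn k Hk).
        destruct Hx as [Hx|Hx].
        - assert (Hsl : dC k 0 <= (C k (xS k) - C k (l * xS k)) / (xS k - l * xS k)).
          { apply (LIM2 (C k) 0 (dC k 0) (xS k)); auto.
            intros h Hh1 Hh2.
            pose proof (slope_mono (C k) (HCconv k Hk) 0 h (l * xS k) (xS k) ltac:(lra) Hh1 ltac:(nra) ltac:(nra) ltac:(nra) Hh2) as SM.
            replace (0 + h) with h by ring. replace (h - 0) with h in SM by ring. exact SM. }
          apply ge_div1 in Hsl; try nra.
          assert (c * ((1 - l) * xS k) <= dC k 0 * ((1 - l) * xS k)) by (apply Rmult_le_compat_r; nra).
          nra.
        - rewrite <- Hx. replace (l * 0) with 0 by ring. replace (c * ((1 - l) * 0)) with 0 by ring. rewrite HC0; auto. lra. }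
      rewrite sumN_scal, sumN_scal in Hc. fold (total N xS) XS in Hc.
      assert (c * ((1 - l) * XS) = c * (XS - s)) by (unfold l; field; lra).
      lra. }
assert (HWS : 0 < welfare N p C xS).
{ unfold c, min_over in HA4. destruct (minN_att (N - 1) (fun n => dC n 0)) as [n0 [Hn0 E0]].
  rewrite E0 in HA4. assert (Hn0N : (n0 < N)%nat) by lia.
  set (ep := (p 0 - dC n0 0) / 2).
  assert (Hep : 0 < ep) by (unfold ep; lra).
  destruct (HCder0 n0 Hn0N ep Hep) as [d1 [Hd1 G1]].
  destruct (Hpcont 0 ltac:(lra) ep Hep) as [d2 [Hd2 G2]].
  set (h := Rmin d1 d2 / 2).
  assert (Hh : 0 < h < d1 /\ h < d2) by (unfold h, Rmin; destruct Rle_dec; lra).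
  destruct Hh as [[Hh0 Hh1] Hh2].
  set (y := fun k => if Nat.eqb k n0 then h else 0).
  assert (Hy0 : nonneg_vec N y) by (intros k _; unfold y; destruct Nat.eqb; lra).
  specialize (HSopt y Hy0).
  assert (Ty : total N y = h).
  { unfold total, y. rewrite (sumN_if N n0 (fun _ => h) (fun _ => 0)); auto. rewrite sumN_zero. ring. }
  assert (Cy : sumN N (fun k => C k (y k)) = C n0 h).
  { unfold y. rewrite (sumN_ext N _ (fun k => if Nat.eqb k n0 then C k h else C k 0)).
    rewrite sumN_if; auto. rewrite HC0sum, HC0; auto. ring.
    intros k _. destruct Nat.eqb; auto. }
  assert (Wy : welfare N p C y = RInt p 0 h - C n0 h).
  { unfold welfare. rewrite Ty, Cy, RInt_eq; auto; lra. }
  pose proof (int_ge_aff p Hpcont 0 h (p h) 0 ltac:(lra) ltac:(lra)) as I.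
  assert (I2 : p h * h <= RInt p 0 h).
  { eapply Rle_trans; [|apply I]. lra. intros q Hq. pose proof (Hpmono q h ltac:(lra)). lra. }
  specialize (G1 h ltac:(lra)). replace (0 + h) with h in G1 by ring. rewrite HC0 in G1; auto.
  assert (Hcq : C n0 h / h < dC n0 0 + ep).
  { replace ((C n0 h - 0) / h) with (C n0 h / h) in G1 by (field; lra).
    unfold Rabs in G1; destruct Rcase_abs in G1; lra. }
  apply mul_gt_of_div in Hcq; auto.
  assert (Rabs (h - 0) < d2) by (rewrite Rabs_right; lra).
  specialize (G2 h ltac:(lra) H). unfold Rabs in G2; destruct Rcase_abs in G2.
  - assert ((p 0 - ep) * h < p h * h) by (apply Rmult_lt_compat_r; lra).
    assert (ep * 2 = p 0 - dC n0 0) by (unfold ep; field). nra.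
  - assert (p 0 * h <= p h * h) by (apply Rmult_le_compat_r; lra).
    assert (ep * 2 = p 0 - dC n0 0) by (unfold ep; field). nra. }
destruct Hy as [y [Hy1 [Hy2 Hy3]]].
pose proof (Hkey y Hy1 Hy2) as K.
unfold efficiency. fold Wx.
set (WS := welfare N p C xS) in *.
assert (Hfin : D * WS <= Wx * (3 * D + E)).
{ assert (Hq : (a * X) * (a * X) / (2 * D) * D = a * (a * (X * X) / 2)) by (field; lra).
  assert (a * (a * (X * X) / 2) <= a * Wx) by (apply Rmult_le_compat_l; lra).
  assert (0 <= Wx) by nra.
  assert (a * Wx <= E * Wx) by (apply Rmult_le_compat_r; lra).
  assert (WS * D <= (Wx + (a * X) * (a * X) / (2 * D)) * D) by (apply Rmult_le_compat_r; lra).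
  assert (D * Wx <= 3 * D * Wx) by nra.
  nra. }
replace (dpL s / (3 * dpL s + dpR t)) with (D / (3 * D + E)).
2:{ unfold D, E. field. lra. }
apply div_le; try lra.
Qed.
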